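(* Let $\mathfrak L=\mathbb V\oplus\mathbb W$ be a color gLt-algebra admitting a quasi-multiplicative basis $\mathfrak B=\{e_i\}_{i\in I}$ of $\mathbb W\neq 0$. If $\mathfrak L$ is simple, then any two elements of the index set $I$ are connected.
   Context: Let $\mathbb F$ be a field, $\mathbb G$ an abelian group, $n\ge 2$, and $\epsilon:\mathbb G\times\mathbb G\to\mathbb F\setminus\{0\}$ a bicharacter ($\epsilon(k,g+h)=\epsilon(k,g)\epsilon(k,h)$, $\epsilon(g+h,k)=\epsilon(g,k)\epsilon(h,k)$, $\epsilon(g,h)\epsilon(h,g)=1$). A graded $n$-ary algebra is a $\mathbb G$-graded vector space $\mathfrak L=\bigoplus_{g\in\mathbb G}\mathfrak L_g$ with an $n$-linear map $\langle\cdot,\dots,\cdot\rangle:\mathfrak L^n\to\mathfrak L$ such that $\langle\mathfrak L_{g_1},\dots,\mathfrak L_{g_n}\rangle\subset\mathfrak L_{g_1+\dots+g_n}$. For $\sigma\in\mathbb S_n$ write $\langle x_1,\dots,x_n\rangle_\sigma:=\langle x_{\sigma(1)},\dots,x_{\sigma(n)}\rangle$; for subsets $A_1,\dots,A_n$, $\langle A_1,\dots,A_n\rangle_\sigma$ denotes the linear span of all $\langle x_1,\dots,x_n\rangle_\sigma$ with $x_r\in A_r$. A color gLt-algebra is a graded $n$-ary algebra satisfying, for each $k=1,\dots,n$ and fixed scalars $\alpha^{\sigma_1,\sigma_2}_{i,j,k}\in\mathbb F$, the color version (each term on the right multiplied by the product of values of $\epsilon$ on the degrees of the homogeneous arguments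 transposed in passing from the left-hand order to the order of that term) of the identity $\langle y_1,\dots,y_{k-1},\langle x_1,\dots,x_n\rangle,y_k,\dots,y_{n-1}\rangle=\sum_{1\le i,j\le n,\,\sigma_1\in\mathbb S_n,\,\sigma_2\in\mathbb S_{n-1}}\alpha^{\sigma_1,\sigma_2}_{i,j,k}\langle x_{\sigma_1(1)},\dots,x_{\sigma_1(i-1)},\langle y_{\sigma_2(1)},\dots,y_{\sigma_2(j-1)},x_{\sigma_1(i)},y_{\sigma_2(j)},\dots,y_{\sigma_2(n-1)}\rangle,x_{\sigma_1(i+1)},\dots,x_{\sigma_1(n)}\rangle$. A $\mathbb G$-graded subspace $\mathcal I\subset\mathfrak L$ is a color gLt-ideal if $\langle\mathcal I,\mathfrak L,\dots,\mathfrak L\rangle_\sigma\subset\mathcal I$ for every $\sigma\in\mathbb S_n$. $\mathfrak L$ is simple if its only color gLt-ideals are $\{0\}$ and $\mathfrak L$. $\mathfrak L$ admits a quasi-multiplicative basis if $\mathfrak L=\mathbb V\oplus\mathbb W$ with $\mathbb V$, $\mathbb W\ne0$ graded subspaces and $\mathfrak B=\{e_i\}_{i\in I}$ a basis of homogeneous elements of $\mathbb W$ such that: (1) for $i_1,\dots,i_n\in I$, either $\langle e_{i_1},\dots,e_{i_n}\rangle\in\mathbb Fe_j$ for some $j\in I$ or $\langle e_{i_1},\dots,e_{i_n}\rangle\in\mathbb V$; (2) for $0<k<n$, $i_1,\dots,i_k\in I$ and $\sigma\in\mathbb S_n$, $\langle e_{i_1},\dots,e_{i_k},\mathbb V,\dots,\mathbb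 V\rangle_\sigma\subset\mathbb Fe_{j_\sigma}$ for some $j_\sigma\in I$; (3) either $\langle\mathbb V,\dots,\mathbb V\rangle\subset\mathbb Fe_j$ for some $j\in I$ or $\langle\mathbb V,\dots,\mathbb V\rangle\subset\mathbb V$. Index maps: let $v$ be a symbol not in $I$, $\mathfrak I:=I\,\dot\cup\,\{v\}$; for each $j\in\mathfrak I$ take a new symbol $\overline j$, $\overline I:=\{\overline i:i\in I\}$, $\overline{\mathfrak I}:=\overline I\,\dot\cup\,\{\overline v\}$; set $\overline{(\overline j)}:=j$, $\overline J:=\{\overline j:j\in J\}$ for a set $J$ of symbols ($\overline\emptyset=\emptyset$). Put $u_j:=e_j$ for $j\in I$ and $u_v:=\mathbb V$. For $\sigma\in\mathbb S_n$ and $(j_1,\dots,j_n)\in\mathfrak I^n$ let $a_\sigma(j_1,\dots,j_n)=\{r\}$ if $r\in I$ and $0\ne\langle u_{j_1},\dots,u_{j_n}\rangle_\sigma\subset\mathbb Fe_r$, $=\{v\}$ if $0\ne\langle u_{j_1},\dots,u_{j_n}\rangle_\sigma\subset\mathbb V$, and $=\emptyset$ otherwise. For $j,j_2,\dots,j_n\in\mathfrak I$ let $b_\sigma(j,\overline j_2,\dots,\overline j_n):=\{x\in\mathfrak I: a_\sigma(x,j_2,\dots,j_n)=\{j\}\}$. Define $\mu$ on $(\mathfrak I\,\dot\cup\,\overline{\mathfrak I})\times(\mathfrak I^{n-1}\,\dot\cup\,\overline{\mathfrak I}^{n-1})$ with values subsets of $\mathfrak I$ by: $\mu(j,j_1,\dots,j_{n-1})=\bigcup_{\sigma\in\mathbb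 S_n}a_\sigma(j,j_1,\dots,j_{n-1})$ for $j,j_1,\dots,j_{n-1}\in\mathfrak I$; $\mu(j,\overline j_1,\dots,\overline j_{n-1})=\bigcup_{\sigma\in\mathbb S_n}b_\sigma(j,\overline j_1,\dots,\overline j_{n-1})$ for $j,j_1,\dots,j_{n-1}\in\mathfrak I$; $\mu(\overline j,j_1,\dots,j_{n-1})=\bigcup_{1\le k\le n-1,\ \sigma\in\mathbb S_n}b_\sigma(j_k,\overline j,\overline j_1,\dots,\overline j_{k-1},\overline j_{k+1},\dots,\overline j_{n-1})$ for $j,j_1,\dots,j_{n-1}\in\mathfrak I$; and $\mu(\overline j,\overline j_1,\dots,\overline j_{n-1})=\emptyset$. Define $\phi$ on pairs $(J,X)$ with $J\subset I\,\dot\cup\,\overline I$ and $X\in\mathfrak I^{n-1}\,\dot\cup\,\overline{\mathfrak I}^{n-1}$ by $\phi(\emptyset,X)=\emptyset$ and, for $J\ne\emptyset$, $\phi(J,X):=K\cup\overline K$ where $K:=\big(\bigcup_{j\in J}\mu(j,X)\big)\setminus\{v\}$. Connections: for distinct $i,j\in I$, $i$ is connected to $j$ if there exist $t\ge1$, $X_1,\dots,X_t\in\mathfrak I^{n-1}\,\dot\cup\,\overline{\mathfrak I}^{n-1}$ and $\widetilde i\in\{i,\overline i\}$ such that $\phi(\{\widetilde i\},X_1)\ne\emptyset$, …, $\phi(\cdots\phi(\{\widetilde i\},X_1)\cdots,X_{t-1})\ne\emptyset$, and $j\in\phi(\cdots\phi(\phi(\{\widetilde i\},X_1),X_2)\cdots,X_t)$;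 every $i$ is connected to itself. *)

(* Defs.v *)
From HB Require Import structures.
From mathcomp Require Import all_boot all_order all_algebra all_fingroup.
Set Implicit Arguments. Unset Strict Implicit. Unset Printing Implicit Defensive.
Import GRing.Theory.
Local Open Scope ring_scope.

Definition subspace {F : fieldType} {L : lmodType F} (S : L -> Prop) : Prop :=
  S 0 /\ (forall x y, S x -> S y -> S (x + y)) /\ (forall (a : F) x, S x -> S (a *: x)).

Definition is_grading {F : fieldType} {G : zmodType} {L : lmodType F}
  (Lg : G -> L -> Prop) : Prop :=
  (forall g, subspace (Lg g)) /\
  (forall x : L, exists (s : seq G) (c : G -> L),
      uniq s /\ (forall g, Lg g (c g)) /\ x = \sum_(g <- s) c g) /\
  (forall (s : seq G) (c : G -> L), uniq s -> (forall g, Lg g (c g)) ->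
      \sum_(g <- s) c g = 0 -> forall g, g \in s -> c g = 0).

Definition graded_subspace {F : fieldType} {G : zmodType} {L : lmodType F}
  (Lg : G -> L -> Prop) (S : L -> Prop) : Prop :=
  subspace S /\
  forall x, S x -> exists (s : seq G) (c : G -> L),
    uniq s /\ (forall g, Lg g (c g)) /\ (forall g, g \in s -> S (c g)) /\
    x = \sum_(g <- s) c g.

Definition bicharacter {F : fieldType} {G : zmodType} (eps : G -> G -> F) : Prop :=
  (forall g h, eps g h != 0) /\
  (forall k g h, eps k (g + h) = eps k g * eps k h) /\
  (forall g h k, eps (g + h) k = eps g k * eps h k) /\
  (forall g h, eps g h * eps h g = 1).

Definition multilinear {F : fieldType} {L : lmodType F} {n : nat}
  (mu : {ffun 'I_n -> L} -> L) : Prop :=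
  forall (x : {ffun 'I_n -> L}) (k : 'I_n) (a : F) (y z : L),
    mu [ffun p => if p == k then a *: y + z else x p] =
    a *: mu [ffun p => if p == k then y else x p] +
    mu [ffun p => if p == k then z else x p].

Definition graded_nary_algebra {F : fieldType} {G : zmodType} {L : lmodType F}
  {n : nat} (Lg : G -> L -> Prop) (mu : {ffun 'I_n -> L} -> L) : Prop :=
  is_grading Lg /\ multilinear mu /\
  forall (x : {ffun 'I_n -> L}) (d : 'I_n -> G),
    (forall r, Lg (d r) (x r)) -> Lg (\sum_(r < n) d r) (mu x).

Definition permprod {L : Type} {n : nat} (mu : {ffun 'I_n -> L} -> L)
  (s : 'S_n) (x : {ffun 'I_n -> L}) : L := mu [ffun p => x (s p)].

(* ---------- the color sign ----------
   Items are labelled by naturals; [s] is the left-hand order and [t] the order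
   in a term.  Each pair (a,b) with a before b in [s] but b before a in [t] has
   been transposed and contributes eps (deg a) (deg b). *)
Definition ksign {F : fieldType} {G : zmodType} (eps : G -> G -> F)
  (deg : nat -> G) (s t : seq nat) : F :=
  \prod_(a <- s) \prod_(b <- s | (index a s < index b s)%N && (index b t < index a t)%N)
     eps (deg a) (deg b).

Definition ext {L : Type} {m : nat} (d : L) (f : 'I_m -> L) (q : nat) : L :=
  oapp f d (insub q).

(* The color gLt identity, for fixed scalars alpha i j k s1 s2
   (i, j, k are 0-based: position i in 'I_n stands for the paper's i+1). *)
Definition color_gLt {F : fieldType} {G : zmodType} {L : lmodType F} {n : nat}
  (eps : G -> G -> F) (Lg : G -> L -> Prop) (mu : {ffun 'I_n -> L} -> L)
  (alpha : 'I_n -> 'I_n -> 'I_n -> 'S_n -> 'S_n.-1 -> F) : Prop :=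
  forall (k : 'I_n) (x : {ffun 'I_n -> L}) (dx : 'I_n -> G)
         (y : 'I_n.-1 -> L) (dy : 'I_n.-1 -> G),
    (forall r, Lg (dx r) (x r)) -> (forall q, Lg (dy q) (y q)) ->
    let yn := ext 0 y in
    (* labels: x_r is labelled r, y_q is labelled n + q *)
    let deg (t : nat) : G :=
      if (t < n)%N then ext 0 dx t else ext 0 dy (t - n)%N in
    let lseq : seq nat :=
      map (fun q : 'I_n.-1 => (n + val q)%N) [seq q : 'I_n.-1 <- enum 'I_n.-1 | (q < k)%N] ++
      [seq val p | p <- enum 'I_n] ++
      map (fun q : 'I_n.-1 => (n + val q)%N) [seq q : 'I_n.-1 <- enum 'I_n.-1 | (k <= q)%N] in
    mu [ffun p : 'I_n => if (p < k)%N then yn p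
                          else if p == k then mu x else yn p.-1] =
    \sum_(i < n) \sum_(j < n) \sum_(s1 : 'S_n) \sum_(s2 : 'S_n.-1)
      let ys := ext 0 (fun q => y (s2 q)) in
      let rseq : seq nat :=
        map (fun p : 'I_n => val (s1 p)) [seq p : 'I_n <- enum 'I_n | (p < i)%N] ++
        map (fun q : 'I_n.-1 => (n + val (s2 q))%N) [seq q : 'I_n.-1 <- enum 'I_n.-1 | (q < j)%N] ++
        [:: val (s1 i)] ++
        map (fun q : 'I_n.-1 => (n + val (s2 q))%N) [seq q : 'I_n.-1 <- enum 'I_n.-1 | (j <= q)%N] ++
        map (fun p : 'I_n => val (s1 p)) [seq p : 'I_n <- enum 'I_n | (i < p)%N] in
      let inner := mu [ffun q : 'I_n => if (q < j)%N then ys q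
                                         else if q == j then x (s1 i) else ys q.-1] in
      (alpha i j k s1 s2 * ksign eps deg lseq rseq) *:
        mu [ffun p : 'I_n => if p == i then inner else x (s1 p)].

Definition gLt_ideal {F : fieldType} {G : zmodType} {L : lmodType F} {n : nat}
  (Lg : G -> L -> Prop) (mu : {ffun 'I_n -> L} -> L) (S : L -> Prop) : Prop :=
  graded_subspace Lg S /\
  forall (s : 'S_n) (x : {ffun 'I_n -> L}),
    (forall r : 'I_n, val r = 0%N -> S (x r)) -> S (permprod mu s x).

Definition simple_gLt {F : fieldType} {G : zmodType} {L : lmodType F} {n : nat}
  (Lg : G -> L -> Prop) (mu : {ffun 'I_n -> L} -> L) : Prop :=
  forall S : L -> Prop, gLt_ideal Lg mu S ->
    (forall x, S x <-> x = 0) \/ (forall x, S x).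

Definition quasi_mult_basis {F : fieldType} {G : zmodType} {L : lmodType F} {n : nat}
  {I : Type} (Lg : G -> L -> Prop) (mu : {ffun 'I_n -> L} -> L)
  (V W : L -> Prop) (e : I -> L) : Prop :=
  graded_subspace Lg V /\ graded_subspace Lg W /\
  (exists v, V v /\ v <> 0) /\ (exists w, W w /\ w <> 0) /\
  (forall x, V x -> W x -> x = 0) /\
  (forall x, exists v w, V v /\ W w /\ x = v + w) /\
  (forall i, W (e i)) /\ (forall i, exists g, Lg g (e i)) /\
  (forall (m : nat) (f : 'I_m -> I) (c : 'I_m -> F), injective f ->
     \sum_(t < m) c t *: e (f t) = 0 -> forall t, c t = 0) /\
  (forall w, W w -> exists (m : nat) (f : 'I_m -> I) (c : 'I_m -> F),
     w = \sum_(t < m) c t *: e (f t)) /\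
  (forall ii : 'I_n -> I,
     (exists j (a : F), mu [ffun p => e (ii p)] = a *: e j) \/
     V (mu [ffun p => e (ii p)])) /\
  (forall k : nat, (0 < k < n)%N -> forall (ii : nat -> I) (s : 'S_n),
     exists j, forall x : {ffun 'I_n -> L},
       (forall r : 'I_n, (r < k)%N -> x r = e (ii (val r))) ->
       (forall r : 'I_n, (k <= r)%N -> V (x r)) ->
       exists a : F, permprod mu s x = a *: e j) /\
  ((exists j, forall x : {ffun 'I_n -> L}, (forall r, V (x r)) ->
       exists a : F, mu x = a *: e j) \/
   (forall x : {ffun 'I_n -> L}, (forall r, V (x r)) -> V (mu x))).

(* ---------- index maps ----------
   The index set frak I = I (+) {v} is [option I] (None = v); the barred copy is
   encoded by a boolean tag [true]. *)
Definition inU {L : Type} {I : Type} (e : I -> L) (V : L -> Prop)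
  (j : option I) (y : L) : Prop :=
  match j with Some i => y = e i | None => V y end.

Definition inLine {F : fieldType} {L : lmodType F} {I : Type} (e : I -> L)
  (V : L -> Prop) (t : option I) (z : L) : Prop :=
  match t with Some r => exists c : F, z = c *: e r | None => V z end.

Definition gens {L : Type} {n : nat} {I : Type} (mu : {ffun 'I_n -> L} -> L)
  (e : I -> L) (V : L -> Prop) (s : 'S_n) (js : 'I_n -> option I) (z : L) : Prop :=
  exists x : {ffun 'I_n -> L}, (forall r, inU e V (js r) (x r)) /\ z = permprod mu s x.

Definition amap {F : fieldType} {L : lmodType F} {n : nat} {I : Type}
  (mu : {ffun 'I_n -> L} -> L) (e : I -> L) (V : L -> Prop)
  (s : 'S_n) (js : 'I_n -> option I) (t : option I) : Prop :=
  (exists z, gens mu e V s js z /\ z <> 0) /\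
  (forall z, gens mu e V s js z -> inLine e V t z).

Definition consI {n : nat} {I : Type} (x : option I) (js : 'I_n.-1 -> option I)
  : 'I_n -> option I :=
  fun p => if val p is q.+1 then ext None js q else x.

(* x \in b_s(j, bar j_2, ..., bar j_n)  iff  a_s(x, j_2, ..., j_n) = {j} *)
Definition bmap {F : fieldType} {L : lmodType F} {n : nat} {I : Type}
  (mu : {ffun 'I_n -> L} -> L) (e : I -> L) (V : L -> Prop)
  (s : 'S_n) (j : option I) (js : 'I_n.-1 -> option I) (x : option I) : Prop :=
  forall t, amap mu e V s (consI x js) t <-> t = j.

(* (j, j_1, ..., j_{k-1}, j_{k+1}, ..., j_{n-1}) for k : 'I_n.-1 (0-based) *)
Definition remk {n : nat} {I : Type} (j : option I) (js : 'I_n.-1 -> option I)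
  (k : 'I_n.-1) : 'I_n.-1 -> option I :=
  fun p => if val p is q.+1 then
             (if (q < k)%N then ext None js q else ext None js q.+1)
           else j.

(* t \in mu(a, X) ; a = (barred?, j), X = (barred?, (j_1,...,j_{n-1})) *)
Definition muI {F : fieldType} {L : lmodType F} {n : nat} {I : Type}
  (mu : {ffun 'I_n -> L} -> L) (e : I -> L) (V : L -> Prop)
  (a : bool * option I) (X : bool * ('I_n.-1 -> option I)) (t : option I) : Prop :=
  match a, X with
  | (false, j), (false, js) => exists s : 'S_n, amap mu e V s (consI j js) t
  | (false, j), (true, js)  => exists s : 'S_n, bmap mu e V s j js t
  | (true, j),  (false, js) =>
      exists (k : 'I_n.-1) (s : 'S_n), bmap mu e V s (js k) (remk j js k) t
  | (true, _),  (true, _)   => False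
  end.

(* phi(J, X) = K \cup bar K, K = (\bigcup_{j in J} mu(j, X)) \ {v};
   subsets of I (+) bar I are predicates on bool * I (true = barred).
   (For J empty this is empty, as required.) *)
Definition phi {F : fieldType} {L : lmodType F} {n : nat} {I : Type}
  (mu : {ffun 'I_n -> L} -> L) (e : I -> L) (V : L -> Prop)
  (J : bool * I -> Prop) (X : bool * ('I_n.-1 -> option I)) : bool * I -> Prop :=
  fun z => exists j : bool * I, J j /\ muI mu e V (j.1, Some j.2) X (Some z.2).

Fixpoint phin {F : fieldType} {L : lmodType F} {n : nat} {I : Type}
  (mu : {ffun 'I_n -> L} -> L) (e : I -> L) (V : L -> Prop)
  (J : bool * I -> Prop) (X : nat -> bool * ('I_n.-1 -> option I)) (m : nat)
  : bool * I -> Prop :=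
  match m with
  | 0 => J
  | m'.+1 => phi mu e V (phin mu e V J X m') (X m')
  end.

Definition connected {F : fieldType} {L : lmodType F} {n : nat} {I : Type}
  (mu : {ffun 'I_n -> L} -> L) (e : I -> L) (V : L -> Prop) (i j : I) : Prop :=
  i = j \/
  (i <> j /\
   exists (t : nat) (X : nat -> bool * ('I_n.-1 -> option I)) (b : bool),
     (1 <= t)%N /\
     (forall m, (0 < m < t)%N ->
        exists z, phin mu e V (fun z => z = (b, i)) X m z) /\
     phin mu e V (fun z => z = (b, i)) X t (false, j)).

(* Main.v *)
Require Import Defs.
From HB Require Import structures.
From mathcomp Require Import all_boot all_order all_algebra all_fingroup.
From mathcomp Require Import zify.
From Stdlib Require Import ClassicalEpsilon FunctionalExtensionality.

Definition ceqb {T : Type} (a b : T) : bool :=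
  if excluded_middle_informative (a = b) then true else false.
Lemma ceqP T : Equality.axiom (@ceqb T).
Proof. move=> a b; rewrite /ceqb; case: excluded_middle_informative => h; by constructor. Qed.
Definition cT (T : Type) : Type := T.
HB.instance Definition _ (T : Type) := hasDecEq.Build (cT T) (@ceqP T).

Definition pick_opt {T : Type} (P : T -> Prop) : option T :=
  match excluded_middle_informative (exists x, P x) with
  | left H => Some (proj1_sig (constructive_indefinite_description _ H))
  | right _ => None end.
Lemma pick_optS T (P : T -> Prop) x : pick_opt P = Some x -> P x.
Proof.
rewrite /pick_opt; case: excluded_middle_informative => // H [<-].
exact: proj2_sig.
Qed.
Lemma pick_optN T (P : T -> Prop) : pick_opt P = None -> ~ exists x, P x.
Proof. by rewrite /pick_opt; case: excluded_middle_informative. Qed.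
Lemma pick_optE T (P : T -> Prop) x : P x -> exists y, pick_opt P = Some y /\ P y.
Proof.
move=> Px; case E: (pick_opt P) => [y|]; first by exists y; split=> //; exact: pick_optS E.
by case: (@pick_optN _ _ E); exists x.
Qed.

Lemma ext_val {A : Type} {m} {f : 'I_m -> A} {d} {q} (H : (q < m)%N) : ext d f q = f (Ordinal H).
Proof. by rewrite /ext insubT /=; congr f; apply: val_inj. Qed.
Lemma ext_ord (A : Type) m (f : 'I_m -> A) d (q : 'I_m) : ext d f q = f q.
Proof. by rewrite /ext valK. Qed.
Lemma ext_cases (A : Type) m (f : 'I_m -> A) d q : ext d f q = d \/ exists r, ext d f q = f r.
Proof. rewrite /ext; case: insub => [r|]; [right; by exists r | by left]. Qed.

Lemma perm_seq n (l : seq 'I_n) : uniq l ->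
  exists p : 'S_n, forall r : 'I_n, ((p r \in l) = (r < size l)%N) /\
                    ((r < size l)%N -> p r = nth r l r).
Proof.
move=> ul.
set sq := l ++ [seq x <- enum 'I_n | x \notin l].
have usq : uniq sq.
  rewrite cat_uniq ul /= filter_uniq ?enum_uniq // andbT.
  apply/hasPn => x; rewrite mem_filter; by case/andP.
have msq : forall x, x \in sq by move=> x; rewrite mem_cat mem_filter mem_enum andbT; case: (x \in l).
have ssq : size sq = n.
  rewrite -[RHS](size_enum_ord n).
  apply: perm_size; apply: uniq_perm => //; first exact: enum_uniq.
  by move=> x; rewrite msq mem_enum.
pose f (r : 'I_n) := nth r sq r.
have fnth : forall r r' : 'I_n, nth r sq r = nth r' sq r.
  by move=> r r'; apply: set_nth_default; rewrite ssq ltn_ord.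
have finj : injective f.
  move=> r1 r2; rewrite /f (fnth r2 r1) => /eqP; rewrite nth_uniq ?ssq ?ltn_ord //.
  by move/eqP/val_inj.
exists (perm finj) => r; rewrite permE /f.
have Hn : forall r : 'I_n, (r < size l)%N -> nth r sq r = nth r l r.
  by move=> r' h; rewrite nth_cat h.
split; last exact: Hn.
case: (ltnP r (size l)) => h; first by rewrite Hn // mem_nth.
rewrite nth_cat ltnNge h /=.
have : nth r [seq x <- enum 'I_n | x \notin l] (r - size l) \in [seq x <- enum 'I_n | x \notin l].
  apply: mem_nth.
  have: size sq = n by [].
  rewrite size_cat => hs. have := ltn_ord r. move: hs h. set a := size l. set b := size _. move=> *; lia.
by rewrite mem_filter => /andP[/negbTE].
Qed.

Lemma perm_two n (a b : 'I_n) (H0 : (0 < n)%N) (H1 : (1 < n)%N) : a != b ->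
  exists p : 'S_n, p (Ordinal H0) = a /\ p (Ordinal H1) = b.
Proof.
move=> ab; have ul : uniq [:: a; b] by rewrite /= inE ab.
have [p Hp] := @perm_seq _ _ ul; exists p; split.
- by have [_ ->] := Hp (Ordinal H0).
- by have [_ ->] := Hp (Ordinal H1).
Qed.

Lemma perm_front n (P : {set 'I_n}) :
  exists p : 'S_n, forall r : 'I_n, (p r \in P) = (r < #|P|)%N.
Proof.
have [p Hp] := @perm_seq _ _ (enum_uniq (mem P)); exists p => r.
have [H _] := Hp r; rewrite cardE -H; by rewrite mem_enum.
Qed.

Definition pb (P : Prop) : bool := if excluded_middle_informative P then true else false.
Lemma pbP (P : Prop) : reflect P (pb P).
Proof. rewrite /pb; case: excluded_middle_informative => h; by constructor. Qed.

Section Main.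
Import GRing.Theory.
Local Open Scope ring_scope.

Variables (F : fieldType) (G : zmodType) (n : nat) (L : lmodType F)
  (Lg : G -> L -> Prop) (mu : {ffun 'I_n -> L} -> L) (V W : L -> Prop)
  (I : Type) (e : I -> L).
Hypothesis n2 : (2 <= n)%N.
Hypothesis Hgr : graded_nary_algebra Lg mu.
Hypothesis Hq : quasi_mult_basis Lg mu V W e.

Lemma n0 : (0 < n)%N. Proof. by apply: leq_trans n2. Qed.
Lemma n1 : (1 < n)%N. Proof. exact: n2. Qed.
Definition o0 : 'I_n := Ordinal n0.
Definition o1 : 'I_n := Ordinal n1.
Lemma n10 : (0 < n.-1)%N. Proof. by move: n2; case: n => [|[|m]]. Qed.
Definition o0' : 'I_n.-1 := Ordinal n10.

Lemma sub0 S : @subspace F L S -> S 0. Proof. by case. Qed.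
Lemma subD S : @subspace F L S -> forall x y, S x -> S y -> S (x + y). Proof. by case=> _ []. Qed.
Lemma subZ S : @subspace F L S -> forall a x, S x -> S (a *: x). Proof. by case=> _ []. Qed.
Lemma subN S : @subspace F L S -> forall x, S x -> S (- x).
Proof. by move=> hS x Sx; rewrite -scaleN1r; apply: subZ. Qed.
Lemma subB S : @subspace F L S -> forall x y, S x -> S y -> S (x - y).
Proof. by move=> hS x y Sx Sy; apply: subD => //; apply: subN. Qed.
Lemma subsum S : @subspace F L S -> forall (T : Type) (r : seq T) (P : pred T) (f : T -> L),
  (forall t, P t -> S (f t)) -> S (\sum_(t <- r | P t) f t).
Proof.
move=> hS T r P f H; elim/big_rec: _; first exact: sub0.
by move=> t x Pt Sx; apply: subD => //; apply: H.
Qed.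

Lemma subV : subspace V. Proof. by case: Hq => [[]]. Qed.
Lemma subW : subspace W. Proof. by case: Hq => _ [[]]. Qed.
Lemma gradV : forall x, V x -> exists (s : seq G) (c : G -> L),
    uniq s /\ (forall g, Lg g (c g)) /\ (forall g, g \in s -> V (c g)) /\
    x = \sum_(g <- s) c g.
Proof. by case: Hq => [[]]. Qed.
Lemma VW0 : forall x, V x -> W x -> x = 0.
Proof. by case: Hq => _ [_ [_ [_ [H _]]]]. Qed.
Lemma decVW : forall x, exists v w, V v /\ W w /\ x = v + w.
Proof. by case: Hq => _ [_ [_ [_ [_ [H _]]]]]. Qed.
Lemma eW : forall i, W (e i).
Proof. by case: Hq => _ [_ [_ [_ [_ [_ [H _]]]]]]. Qed.
Lemma ehom : forall i, exists g, Lg g (e i).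
Proof. by case: Hq => _ [_ [_ [_ [_ [_ [_ [H _]]]]]]]. Qed.
Lemma indep : forall (m : nat) (f : 'I_m -> I) (c : 'I_m -> F), injective f ->
     \sum_(t < m) c t *: e (f t) = 0 -> forall t, c t = 0.
Proof. by case: Hq => _ [_ [_ [_ [_ [_ [_ [_ [H _]]]]]]]]. Qed.
Lemma spanW : forall w, W w -> exists (m : nat) (f : 'I_m -> I) (c : 'I_m -> F),
     w = \sum_(t < m) c t *: e (f t).
Proof. by case: Hq => _ [_ [_ [_ [_ [_ [_ [_ [_ [H _]]]]]]]]]. Qed.
Lemma H1 : forall ii : 'I_n -> I,
     (exists j (a : F), mu [ffun p => e (ii p)] = a *: e j) \/
     V (mu [ffun p => e (ii p)]).
Proof. by case: Hq => _ [_ [_ [_ [_ [_ [_ [_ [_ [_ [H _]]]]]]]]]]. Qed.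
Lemma H2 : forall k : nat, (0 < k < n)%N -> forall (ii : nat -> I) (s : 'S_n),
     exists j, forall x : {ffun 'I_n -> L},
       (forall r : 'I_n, (r < k)%N -> x r = e (ii (val r))) ->
       (forall r : 'I_n, (k <= r)%N -> V (x r)) ->
       exists a : F, permprod mu s x = a *: e j.
Proof. by case: Hq => _ [_ [_ [_ [_ [_ [_ [_ [_ [_ [_ [H _]]]]]]]]]]]. Qed.

Lemma Lsub g : subspace (Lg g). Proof. by case: Hgr => [[H _] _]. Qed.
Lemma Hml : multilinear mu. Proof. by case: Hgr => _ []. Qed.
Lemma Hhom : forall (x : {ffun 'I_n -> L}) (d : 'I_n -> G),
    (forall r, Lg (d r) (x r)) -> Lg (\sum_(r < n) d r) (mu x).
Proof. by case: Hgr => _ []. Qed.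

Lemma indep_seq (s : seq (cT I)) (c : cT I -> F) : uniq s ->
  \sum_(k <- s) c k *: e k = 0 -> forall k, k \in s -> c k = 0.
Proof.
move=> us H0 k ks.
have finj : injective (fun t : 'I_(size s) => nth k s t).
  by move=> t1 t2 /eqP; rewrite nth_uniq // => /eqP/val_inj.
have := @indep (size s) (fun t => nth k s t) (fun t => c (nth k s t)) finj.
have E : \sum_(t < size s) c (nth k s t) *: e (nth k s t) = \sum_(x <- s) c x *: e x.
  by rewrite [RHS](big_nth k) big_mkord.
rewrite E H0.
have ik : (index k s < size s)%N by rewrite index_mem.
move=> /(_ erefl (Ordinal ik)) /=. by rewrite nth_index.
Qed.

Lemma e_neq0 i : e i != 0.
Proof.
apply/eqP=> H; have := @indep_seq [:: (i : cT I)] (fun _ => 1) erefl.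
rewrite big_seq1 scale1r H => /(_ erefl i); rewrite inE eqxx => /(_ erefl) /eqP.
by rewrite oner_eq0.
Qed.

Lemma e_line a b r j : a != 0 -> a *: e r = b *: e j -> r = j.
Proof.
move=> a0 H; apply: NNPP => rj.
have u : uniq [:: (r : cT I); (j : cT I)] by rewrite /= inE andbT; apply/eqP.
have := @indep_seq _ (fun k => if ceqb k r then a else - b) u.
rewrite big_cons big_seq1 /=.
have -> : ceqb (r : cT I) r = true by apply/ceqP.
have -> : ceqb (j : cT I) r = false by apply/ceqP => h; apply: rj.
rewrite H scaleNr subrr => /(_ erefl r); rewrite inE eqxx /= => /(_ erefl).
have -> : ceqb (r : cT I) r = true by apply/ceqP.
by move/eqP; rewrite (negbTE a0).
Qed.

Lemma e_inj : injective e.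
Proof. by move=> r j H; apply: (@e_line 1 1); rewrite ?oner_eq0 ?scale1r. Qed.

Lemma VW_line a r : V (a *: e r) -> a *: e r = 0.
Proof. by move=> Hv; apply: VW0 => //; apply: subZ; [exact: subW | exact: eW]. Qed.

Lemma eV r : ~ V (e r).
Proof. by move=> Hv; have := @VW_line 1 r; rewrite scale1r => /(_ Hv) /eqP; rewrite (negbTE (e_neq0 r)). Qed.


Definition spanS (P : L -> Prop) (x : L) : Prop :=
  exists l : seq (F * L), (forall q, q \in l -> P q.2) /\ x = \sum_(q <- l) q.1 *: q.2.
Lemma span0 P : spanS P 0.
Proof. by exists [::]; rewrite big_nil. Qed.
Lemma spanD P x y : spanS P x -> spanS P y -> spanS P (x + y).
Proof.
move=> [l1 [H1' ->]] [l2 [H2' ->]]; exists (l1 ++ l2); rewrite big_cat; split=> // q.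
by rewrite mem_cat => /orP[/H1'|/H2'].
Qed.
Lemma spanZ P a x : spanS P x -> spanS P (a *: x).
Proof.
move=> [l [Hl ->]]; exists [seq (a * q.1, q.2) | q <- l]; split.
  by move=> q /mapP[q' /Hl h ->].
by rewrite big_map scaler_sumr; apply: eq_bigr => q _; rewrite scalerA.
Qed.
Lemma span1 (P : L -> Prop) x : P x -> spanS P x.
Proof. by move=> Px; exists [:: (1, x)]; rewrite big_seq1 scale1r; split=> // q; rewrite inE => /eqP ->. Qed.
Lemma span_sub P : subspace (spanS P).
Proof. split; [exact: span0 | split; [exact: spanD | exact: spanZ]]. Qed.
Lemma span_mono (P Q : L -> Prop) x : (forall y, P y -> Q y) -> spanS P x -> spanS Q x.
Proof. by move=> PQ [l [Hl ->]]; exists l; split=> // q /Hl /PQ. Qed.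

Definition conn := connected mu e V.

Lemma phin_ext J X X' m : (forall k, (k < m)%N -> X k = X' k) ->
  phin mu e V J X m = phin mu e V J X' m.
Proof.
elim: m => [|m IH] H //=.
by rewrite IH ?H // => k km; apply: H; apply: ltnW.
Qed.

Lemma phin_flag J X m b b' x : (0 < m)%N -> phin mu e V J X m (b, x) -> phin mu e V J X m (b', x).
Proof. by case: m. Qed.

Lemma conn_step i c b X r : conn i c -> muI mu e V (b, Some c) X (Some r) -> conn i r.
Proof.
move=> Hc Hm; case: (classic (i = r)) => ir; first by left.
right; split=> //.
case: Hc => [ic | [_ [t [X0 [b0 [t1 [Hint Ht]]]]]]].
  rewrite -ic in Hm.
  exists 1%N, (fun _ => X), b; split=> //; split; first by move=> m /andP[h1 h2]; lia.
  by exists (b, i).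
exists t.+1, (fun m => if (m < t)%N then X0 m else X), b0; split=> //.
have Eq : forall m, (m <= t)%N -> phin mu e V (fun z => z = (b0, i)) (fun m => if (m < t)%N then X0 m else X) m =
                 phin mu e V (fun z => z = (b0, i)) X0 m.
  by move=> m mt; apply: phin_ext => k km; rewrite ifT //; apply: leq_trans km mt.
split.
  move=> m /andP[m0 mt]; rewrite Eq //.
  case: (ltnP m t) => mt'; first by apply: Hint; rewrite m0.
  have -> : m = t by apply/eqP; rewrite eqn_leq mt'; rewrite ltnS in mt; rewrite mt.
  by exists (false, c).
rewrite /= Eq // ltnn; exists (b, c); split=> //.
by apply: (@phin_flag _ _ _ false) => //; apply: leq_trans t1.
Qed.

Lemma conn_refl i : conn i i. Proof. by left. Qed.


Definition EV (u : L) := (exists m, u = e m) \/ V u.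
Definition Jof (z : {ffun 'I_n -> L}) (p : 'I_n) : option I := pick_opt (fun m => z p = e m).
Lemma Jof_spec {z : {ffun 'I_n -> L}} {p : 'I_n} : EV (z p) -> inU e V (Jof z p) (z p).
Proof.
move=> Hev; rewrite /Jof; case E: pick_opt => [m|] /=; first exact: pick_optS E.
case: Hev => // -[m Hm]; case: (@pick_optN _ _ E); by exists m.
Qed.
Lemma Jof_e {z : {ffun 'I_n -> L}} {p : 'I_n} {c} : z p = e c -> Jof z p = Some c.
Proof.
move=> H; rewrite /Jof; have [y [-> Hy]] := @pick_optE _ (fun m => z p = e m) c H.
by congr Some; apply: e_inj; rewrite -Hy -H.
Qed.

Lemma gens_iff (s : 'S_n) (js : 'I_n -> option I) w : gens mu e V s js w <->
  exists z' : {ffun 'I_n -> L}, (forall p, inU e V (js (s p)) (z' p)) /\ w = mu z'.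
Proof.
split.
  move=> [x [Hx ->]]; exists [ffun p => x (s p)]; split=> // p; rewrite ffunE; exact: Hx.
move=> [z' [Hz ->]]; exists [ffun r => z' ((s^-1)%g r)]; split.
  by move=> r; rewrite ffunE; have := Hz ((s^-1)%g r); rewrite permKV.
by rewrite /permprod; congr mu; apply/ffunP => p; rewrite !ffunE permK.
Qed.

Lemma L2 (J : 'I_n -> option I) : (exists p, J p = None) -> (exists p m, J p = Some m) ->
  exists jj, forall z : {ffun 'I_n -> L}, (forall p, inU e V (J p) (z p)) -> exists b, mu z = b *: e jj.
Proof.
move=> [pN HN] [p0 [m0 H0]].
pose P := [set p | isSome (J p)].
have [pi Hpi] := @perm_front _ P.
have k0 : (0 < #|P|)%N by apply/card_gt0P; exists p0; rewrite inE H0.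
have kn : (#|P| < n)%N.
  have := cardsC P; rewrite card_ord => Hc.
  have : (0 < #|~: P|)%N by apply/card_gt0P; exists pN; rewrite !inE HN.
  move: Hc; set a := #|P|; set b := #|~: P|; move=> *; lia.
have [jj Hjj] := @H2 #|P| (introT andP (conj k0 kn)) (ext m0 (fun p => odflt m0 (J (pi p)))) (pi^-1)%g.
exists jj => z Hz.
have [b Hb] : exists b, permprod mu (pi^-1)%g [ffun r => z (pi r)] = b *: e jj; last first.
  exists b; rewrite -Hb /permprod; congr mu; apply/ffunP => p; by rewrite !ffunE permKV.
apply: Hjj.
- move=> r rk; rewrite ffunE ext_ord.
  have : pi r \in P by rewrite Hpi.
  rewrite inE; have := Hz (pi r); by case: (J (pi r)).
- move=> r rk; rewrite ffunE.
  have : pi r \notin P by rewrite Hpi -leqNgt.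
  rewrite inE; have := Hz (pi r); by case: (J (pi r)).
Qed.

Lemma Lall (J : 'I_n -> option I) (z : {ffun 'I_n -> L}) : (forall p, isSome (J p)) ->
  (forall p, inU e V (J p) (z p)) -> exists ii, z = [ffun p => e (ii p)].
Proof.
move=> Hs Hz; case E0 : (J o0) (Hs o0) => [m|] // _.
exists (fun p => odflt m (J p)); apply/ffunP => p; rewrite ffunE.
by have := Hz p; case: (J p) (Hs p).
Qed.

Lemma C0 (z : {ffun 'I_n -> L}) k0 c : (forall p, EV (z p)) -> z k0 = e c ->
  (exists a s, mu z = a *: e s) \/ V (mu z).
Proof.
move=> Hev Hk.
case: (classic (forall p, isSome (Jof z p))) => Hall.
  have [ii ->] := @Lall _ _ Hall (fun p => Jof_spec (Hev p)).
  case: (H1 ii) => [[j [a E]]|Hv]; [left; by exists a, j | by right].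
have [p Hp] : exists p, Jof z p = None.
  apply: NNPP => h; apply: Hall => p; case E: (Jof z p) => //; case: h; by exists p.
have [jj Hjj] := @L2 (Jof z) (ex_intro _ p Hp) (ex_intro _ k0 (ex_intro _ c (Jof_e Hk))).
left; have [b Hb] := Hjj z (fun p => Jof_spec (Hev p)); by exists b, jj.
Qed.


Lemma other (k : 'I_n) : exists p : 'I_n, p != k.
Proof.
case: (eqVneq k o0) => h; last by exists o0; rewrite eq_sym.
by exists o1; rewrite h; apply/eqP => /(congr1 val).
Qed.

Lemma LA (z : {ffun 'I_n -> L}) k0 c r a i : (forall p, EV (z p)) -> z k0 = e c ->
  conn i c -> a != 0 -> mu z = a *: e r -> conn i r.
Proof.
move=> Hev Hk Hc a0 Hmu.
have [kb kbk] := other k0.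
have [pi [Hpi0 _]] := @perm_two _ k0 kb n0 n1 (introN eqP (fun h => (negP kbk) (introT eqP (esym h)))).
pose T r := Jof z (pi r).
pose jsX : 'I_n.-1 -> option I := fun q => ext None T q.+1.
have HT : forall p, consI (Some c) jsX p = T p.
  move=> p; rewrite /consI; case Ep: (val p) => [|q].
    have -> : p = o0 by apply: val_inj.
    by rewrite /T Hpi0 (Jof_e Hk).
  have hq : (q < n.-1)%N by have := ltn_ord p; rewrite Ep => h; lia.
  have hq1 : (q.+1 < n)%N by rewrite -Ep ltn_ord.
  rewrite (ext_val hq) /jsX /= (ext_val hq1); congr T; exact: val_inj.
have Hcons : consI (Some c) jsX = T := functional_extensionality _ _ HT.
apply: (@conn_step i c false (false, jsX)) => //.
exists (pi^-1)%g; rewrite Hcons; split.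
  exists (mu z); split; last by rewrite Hmu; apply/eqP; rewrite scaler_eq0 negb_or a0 e_neq0.
  apply/gens_iff; exists z; split=> // p; rewrite /T permKV; exact: Jof_spec.
move=> w /gens_iff [z' [Hz' ->]].
have Hz'' : forall p, inU e V (Jof z p) (z' p) by move=> p; have := Hz' p; rewrite /T permKV.
case: (classic (forall p, isSome (Jof z p))) => Hall.
  have -> : z' = z.
    apply/ffunP => p; have := Hz'' p; have := Jof_spec (Hev p).
    by case: (Jof z p) (Hall p) => // m _ /= -> ->.
  by exists a.
have [p Hp] : exists p, Jof z p = None.
  apply: NNPP => h; apply: Hall => p; case E: (Jof z p) => //; case: h; by exists p.
have [jj Hjj] := @L2 (Jof z) (ex_intro _ p Hp) (ex_intro _ k0 (ex_intro _ c (Jof_e Hk))).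
have [b0 Hb0] := Hjj z (fun p => Jof_spec (Hev p)).
have rj : r = jj by apply: (@e_line a b0 r jj a0); rewrite -Hmu.
have [b Hb] := Hjj z' Hz''; exists b; by rewrite Hb rj.
Qed.

Lemma LB (ii : 'I_n -> I) pc pl i : pl != pc -> conn i (ii pc) ->
  V (mu [ffun p => e (ii p)]) -> mu [ffun p => e (ii p)] != 0 -> conn i (ii pl).
Proof.
move=> plc Hc Hv g0.
have [pi [Hpi0 Hpi1]] := @perm_two _ pl pc n0 n1 plc.
pose T (r : 'I_n) : option I := Some (ii (pi r)).
pose js : 'I_n.-1 -> option I := fun q => if val q == 0%N then None else ext None T q.+1.
have HT : forall p, consI (Some (ii pl)) (remk (Some (ii pc)) js o0') p = T p.
  move=> p; rewrite /consI; case Ep: (val p) => [|q].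
    have -> : p = o0 by apply: val_inj.
    by rewrite /T Hpi0.
  have hq : (q < n.-1)%N by have := ltn_ord p; rewrite Ep => h; lia.
  rewrite (ext_val hq) /remk /=.
  case: q Ep hq => [|q] Ep hq.
    have -> : p = o1 by apply: val_inj.
    by rewrite /T Hpi1.
  have hq' : (q.+1 < n.-1)%N by [].
  rewrite /= (ext_val hq') /js /=.
  have hq2 : (q.+2 < n)%N by rewrite -Ep ltn_ord.
  rewrite (ext_val hq2); congr T; exact: val_inj.
have Hcons := functional_extensionality _ _ HT.
have gensE : forall w, gens mu e V (pi^-1)%g T w <-> w = mu [ffun p => e (ii p)].
  move=> w; rewrite gens_iff; split.
    move=> [z' [Hz' ->]]; congr mu; apply/ffunP => p; rewrite ffunE.
    by have := Hz' p; rewrite /T permKV.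
  move=> ->; exists [ffun p => e (ii p)]; split=> // p; by rewrite ffunE /T permKV.
apply: (@conn_step i (ii pc) true (false, js)) => //.
exists o0', (pi^-1)%g => t; rewrite Hcons /js /=; split.
  move=> [_ Hall]; move: (Hall _ (proj2 (gensE _) erefl)); clear Hall.
  case: t => // r [cc Hcc]; exfalso; move: g0; rewrite Hcc; apply/negP; rewrite negbK.
  by apply/eqP; apply: VW_line; rewrite -Hcc.
move=> ->; split.
  exists (mu [ffun p => e (ii p)]); split; [exact: (proj2 (gensE _) erefl) | exact/eqP].
by move=> w /(proj1 (gensE w)) ->.
Qed.


Definition Sgen (i : I) (u : L) : Prop :=
  (exists c, u = e c /\ conn i c) \/
  (exists ii : 'I_n -> I, u = mu [ffun p => e (ii p)] /\ (exists p, conn i (ii p)) /\ V u).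

Lemma C1r (z : {ffun 'I_n -> L}) k0 c i : (forall p, EV (z p)) -> z k0 = e c -> conn i c ->
  mu z = 0 \/ (exists a s, conn i s /\ mu z = a *: e s) \/
  (V (mu z) /\ exists ii, z = [ffun p => e (ii p)]).
Proof.
move=> Hev Hk Hc.
case: (classic (forall p, isSome (Jof z p))) => Hall.
  have [ii Ez] := @Lall _ _ Hall (fun p => Jof_spec (Hev p)).
  case: (H1 ii) => [[j [a E]]|Hv]; last by right; right; rewrite Ez; split=> //; exists ii.
  rewrite -Ez in E; case: (eqVneq a 0) => a0; first by left; rewrite E a0 scale0r.
  right; left; exists a, j; split=> //; exact: (@LA z k0 c j a i Hev Hk Hc a0 E).
have [p Hp] : exists p, Jof z p = None.
  apply: NNPP => h; apply: Hall => p; case E: (Jof z p) => //; case: h; by exists p.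
have [jj Hjj] := @L2 (Jof z) (ex_intro _ p Hp) (ex_intro _ k0 (ex_intro _ c (Jof_e Hk))).
have [b Hb] := Hjj z (fun p => Jof_spec (Hev p)).
case: (eqVneq b 0) => b0; first by left; rewrite Hb b0 scale0r.
right; left; exists b, jj; split=> //; exact: (@LA z k0 c jj b i Hev Hk Hc b0 Hb).
Qed.

Lemma C1span (z : {ffun 'I_n -> L}) k0 c i : (forall p, EV (z p)) -> z k0 = e c -> conn i c ->
  spanS (Sgen i) (mu z).
Proof.
move=> Hev Hk Hc.
case: (@C1r z k0 c i Hev Hk Hc) => [->|[[a [s [Hs ->]]]|[Hv [ii Ez]]]]; first exact: span0.
  by apply: spanZ; apply: span1; left; exists s.
apply: span1; right; exists ii; split; first by rewrite -Ez.
split=> //; exists k0.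
have : e (ii k0) = e c by rewrite -Hk Ez ffunE.
by move/e_inj ->.
Qed.

Lemma ml_fun (f : 'I_n -> L) k a u v :
  mu [ffun p => if p == k then a *: u + v else f p] =
  a *: mu [ffun p => if p == k then u else f p] + mu [ffun p => if p == k then v else f p].
Proof.
have := Hml (finfun f) k a u v.
have E : forall w, [ffun p => if p == k then w else (finfun f) p] = [ffun p => if p == k then w else f p].
  by move=> w; apply/ffunP => p; rewrite !ffunE.
by rewrite !E.
Qed.

Lemma mu_zero_slot (f : 'I_n -> L) k : mu [ffun p => if p == k then 0 else f p] = 0.
Proof.
have := ml_fun f k 1 0 0; rewrite scaler0 addr0 scale1r.
move/(congr1 (fun t => t - mu [ffun p => if p == k then 0 else f p])).
by rewrite subrr addrK.
Qed.

Lemma mu_scale_slot (f : 'I_n -> L) k a u :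
  mu [ffun p => if p == k then a *: u else f p] = a *: mu [ffun p => if p == k then u else f p].
Proof. by have := ml_fun f k a u 0; rewrite addr0 mu_zero_slot addr0. Qed.

Lemma mu_slot (z : {ffun 'I_n -> L}) k : mu [ffun p => if p == k then z k else z p] = mu z.
Proof. by congr mu; apply/ffunP => p; rewrite ffunE; case: eqP => // ->. Qed.

Lemma expand (Pp : 'I_n -> L -> Prop) (Q : L -> Prop) : subspace Q ->
  (forall y : {ffun 'I_n -> L}, (forall p, Pp p (y p)) -> Q (mu y)) ->
  forall y : {ffun 'I_n -> L}, (forall p, spanS (Pp p) (y p)) -> Q (mu y).
Proof.
move=> HQ Hbase.
suff H : forall m (y : {ffun 'I_n -> L}), (forall p : 'I_n, (p < m)%N -> spanS (Pp p) (y p)) ->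
    (forall p : 'I_n, (m <= p)%N -> Pp p (y p)) -> Q (mu y).
  move=> y Hy; apply: (H n) => // p; by rewrite leqNgt ltn_ord.
elim=> [|m IH] y Hs Hp; first by apply: Hbase => p; apply: Hp.
case: (ltnP m n) => mn; last first.
  apply: IH => p hp; first by apply: Hs; apply: ltnW.
  by have := ltn_ord p; move: hp mn; lia.
pose km : 'I_n := Ordinal mn.
have [l [Hl Ey]] := Hs km (ltnSn m).
suff : forall l', (forall q, q \in l' -> Pp km q.2) ->
   Q (mu [ffun p => if p == km then \sum_(q <- l') q.1 *: q.2 else y p]).
  by move=> /(_ l Hl); rewrite -Ey mu_slot.
elim=> [|q l' IHl] Hl'; first by rewrite big_nil mu_zero_slot; exact: sub0.
rewrite big_cons Hml; apply: subD => //.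
  apply: subZ => //; apply: IH => p hp.
    rewrite ffunE; case: eqP => [E|_]; first by rewrite E /km /= ltnn in hp.
    by apply: Hs; apply: ltnW.
  rewrite ffunE; case: eqP => [->|ne]; first by apply: Hl'; rewrite mem_head.
  apply: Hp; rewrite ltn_neqAle hp andbT; apply/eqP => E; apply: ne; apply: val_inj; by rewrite /= E.
apply: IHl => q' hq'; apply: Hl'; by rewrite inE hq' orbT.
Qed.


Lemma Case2term i (ii : 'I_n -> I) pc (s1 : 'S_n) (ip jpos : 'I_n) (zi x : {ffun 'I_n -> L}) :
  (forall p, x p = e (ii p)) ->
  conn i (ii pc) -> mu [ffun p => e (ii p)] != 0 -> V (mu [ffun p => e (ii p)]) ->
  (forall q, EV (zi q)) -> zi jpos = e (ii (s1 ip)) ->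
  spanS (Sgen i) (mu [ffun p => if p == ip then mu zi else x (s1 p)]).
Proof.
move=> Hx Hc g0 Hv Hzi Hj.
have EVe : forall m, EV (e m) by move=> m; left; exists m.
case: (eqVneq (s1 ip) pc) => Hs.
  rewrite Hs in Hj.
  case: (@C1r zi jpos (ii pc) i Hzi Hj Hc) => [->|[[a [s' [Hs' ->]]]|[Hvi _]]].
  - rewrite mu_zero_slot; exact: span0.
  - rewrite mu_scale_slot; apply: spanZ.
    apply: (@C1span _ ip s' i) => //; last by rewrite ffunE eqxx.
    by move=> p; rewrite ffunE; case: eqP => _; rewrite ?Hx.
  - have [p0 p0i] := other ip.
    have Hc' : conn i (ii (s1 p0)).
      apply: (@LB ii pc (s1 p0) i) => //.
      by rewrite -Hs; apply/eqP => /perm_inj /eqP; apply/negP.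
    apply: (@C1span _ p0 (ii (s1 p0)) i) => //; last by rewrite ffunE (negbTE p0i) Hx.
    by move=> p; rewrite ffunE; case: eqP => _; [right | rewrite Hx].
have Ez := @C0 zi jpos (ii (s1 ip)) Hzi Hj.
pose p0 := (s1^-1)%g pc.
have p0i : p0 != ip.
  by apply/eqP => E; move: Hs; rewrite -E /p0 permKV eqxx.
have Hp0 : x (s1 p0) = e (ii pc) by rewrite /p0 permKV Hx.
case: Ez => [[a [s' ->]]|Hvi].
  rewrite mu_scale_slot; apply: spanZ.
  apply: (@C1span _ p0 (ii pc) i) => //; last by rewrite ffunE (negbTE p0i).
  by move=> p; rewrite ffunE; case: eqP => _; rewrite ?Hx.
apply: (@C1span _ p0 (ii pc) i) => //; last by rewrite ffunE (negbTE p0i).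
by move=> p; rewrite ffunE; case: eqP => _; [right | rewrite Hx].
Qed.


Definition EVh (u : L) := (exists m, u = e m) \/ (V u /\ exists g, Lg g u).
Definition hdeg (u : L) : G := odflt 0 (pick_opt (fun g => Lg g u)).
Lemma hdegP u : (exists g, Lg g u) -> Lg (hdeg u) u.
Proof.
move=> [g Hg]; have [y [E Hy]] := @pick_optE _ (fun g => Lg g u) g Hg.
by rewrite /hdeg E.
Qed.

Variables (eps : G -> G -> F) (alpha : 'I_n -> 'I_n -> 'I_n -> 'S_n -> 'S_n.-1 -> F).
Hypothesis Hglt : color_gLt eps Lg mu alpha.

Lemma Case2 i (y : {ffun 'I_n -> L}) k (ii : 'I_n -> I) pc :
  conn i (ii pc) -> V (mu [ffun p => e (ii p)]) -> y k = mu [ffun p => e (ii p)] ->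
  (forall p, p != k -> EVh (y p)) -> spanS (Sgen i) (mu y).
Proof.
move=> Hc Hv Hk Hy.
case: (eqVneq (mu [ffun p => e (ii p)]) 0) => g0.
  by rewrite -(mu_slot y k) Hk g0 mu_zero_slot; exact: span0.
pose yv : 'I_n.-1 -> L := fun q => ext 0 y (if (q < k)%N then val q else q.+1).
pose x : {ffun 'I_n -> L} := [ffun p => e (ii p)].
pose dx r := hdeg (x r).
pose dy q := hdeg (yv q).
have Hdx : forall r, Lg (dx r) (x r) by move=> r; apply: hdegP; rewrite ffunE; exact: ehom.
have homx : exists g, Lg g (mu x) by exists (\sum_(r < n) dx r); apply: Hhom.
have Hdy : forall q, Lg (dy q) (yv q).
  move=> q; apply: hdegP; rewrite /yv.
  case: (@ext_cases _ _ y 0 (if (q < k)%N then val q else q.+1)) => [->|[r ->]].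
    by exists 0; apply: sub0; apply: Lsub.
  case: (eqVneq r k) => [->|rk]; first by rewrite Hk.
  by case: (Hy r rk) => [[m ->]|[_ h]] //; exact: ehom.
have H := Hglt k x dx yv dy Hdx Hdy.
cbv zeta in H.
have Ey : [ffun p : 'I_n => if (p < k)%N then ext 0 yv p else if p == k then mu x else ext 0 yv p.-1] = y.
  apply/ffunP => p; rewrite ffunE.
  case: (ltnP p k) => hpk.
    have h : (p < n.-1)%N by have := ltn_ord k; move: hpk; lia.
    rewrite (ext_val h) /yv /= hpk (ext_val (ltn_ord p)); congr (fun_of_fin y); exact: val_inj.
  case: eqP => [->|ne]; first by rewrite Hk.
  have hpk' : (k < p)%N by rewrite ltn_neqAle hpk andbT; apply/eqP => E; apply: ne; apply: val_inj.
  have h : (p.-1 < n.-1)%N by have := ltn_ord p; move: hpk'; lia.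
  have hp : (p.-1.+1 < n)%N by have := ltn_ord p; move: hpk'; lia.
  rewrite (ext_val h) /yv /=.
  have -> : (p.-1 < k)%N = false by apply/negbTE; rewrite -leqNgt; move: hpk'; lia.
  rewrite (ext_val hp); congr (fun_of_fin y); apply: val_inj => /=; move: hpk'; lia.
rewrite Ey in H; rewrite H.
have Hsp := @span_sub (Sgen i).
apply: (@subsum _ Hsp) => ip _; apply: (@subsum _ Hsp) => jp _.
apply: (@subsum _ Hsp) => s1 _; apply: (@subsum _ Hsp) => s2 _.
apply: spanZ.
have EVy : forall r, EV (y r).
  move=> r; case: (eqVneq r k) => [->|rk]; first by right; rewrite Hk.
  by case: (Hy r rk) => [h|[h _]]; [left | right].
have EVyv : forall q, EV (yv q).
  move=> q; rewrite /yv; case: (@ext_cases _ _ y 0 (if (q < k)%N then val q else q.+1)) => [->|[r ->]] //.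
  by right; apply: sub0; exact: subV.
have EVys : forall m, EV (ext 0 (fun q0 : 'I_n.-1 => yv (s2 q0)) m).
  move=> m; case: (@ext_cases _ _ (fun q0 : 'I_n.-1 => yv (s2 q0)) 0 m) => [->|[r ->]] //.
  by right; apply: sub0; exact: subV.
apply: (@Case2term i ii pc s1 ip jp) => //.
- by move=> p; rewrite ffunE.
- move=> q; rewrite ffunE; case: ifP => _ //; case: eqP => _ //.
  by rewrite ffunE; left; eexists.
- by rewrite ffunE ltnn eqxx ffunE.
Qed.


Lemma all_span u : spanS EVh u.
Proof.
have [v [w [Hv [Hw ->]]]] := decVW u.
apply: spanD.
  have [sg [c [_ [Hc [HcV ->]]]]] := @gradV v Hv.
  rewrite big_seq; apply: (@subsum _ (span_sub EVh)) => g gs.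
  by apply: span1; right; split; [apply: HcV | exists g].
have [m [f [c ->]]] := @spanW w Hw.
apply: (@subsum _ (span_sub EVh)) => t _; apply: spanZ; apply: span1; left; by exists (f t).
Qed.

Lemma ideal_prod i (s : 'S_n) (x : {ffun 'I_n -> L}) :
  (forall r : 'I_n, val r = 0%N -> spanS (Sgen i) (x r)) -> spanS (Sgen i) (permprod mu s x).
Proof.
move=> Hx.
pose k := (s^-1)%g o0.
pose Pp (p : 'I_n) := if p == k then Sgen i else EVh.
rewrite /permprod; apply: (@expand Pp _ (span_sub _)).
  move=> y Hy; have := Hy k; rewrite /Pp eqxx => -[[c [Ec Hc]]|[ii [Eg [[pc Hpc] Hv]]]].
    apply: (@C1span y k c i) => // p; case: (eqVneq p k) => [->|pk]; first by left; exists c.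
    by have := Hy p; rewrite /Pp (negbTE pk) => -[h|[h _]]; [left|right].
  apply: (@Case2 i y k ii pc) => //; first by rewrite -Eg.
  by move=> p pk; have := Hy p; rewrite /Pp (negbTE pk).
move=> p; rewrite ffunE /Pp; case: eqP => [->|_]; last exact: all_span.
by rewrite /k permKV; apply: Hx.
Qed.

Lemma Sgen_hom i u : Sgen i u -> exists g, Lg g u.
Proof.
case=> [[c [-> _]]|[ii [-> _]]]; first exact: ehom.
exists (\sum_(r < n) hdeg (e (ii r))); apply: Hhom => r; rewrite ffunE; apply: hdegP; exact: ehom.
Qed.

Lemma regroup (T K : eqType) (l : seq T) (h : T -> K) (U : seq K) (Fv : T -> L) :
  uniq U -> (forall q, q \in l -> h q \in U) ->
  \sum_(k <- U) \sum_(q <- l | h q == k) Fv q = \sum_(q <- l) Fv q.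
Proof.
move=> uU hU.
have E : forall k, \sum_(q <- l | h q == k) Fv q = \sum_(q <- l) (if h q == k then Fv q else 0).
  by move=> k; rewrite big_mkcond.
rewrite (eq_bigr _ (fun k _ => E k)).
rewrite exchange_big /= [LHS]big_seq [RHS]big_seq; apply: eq_bigr => q ql.
rewrite -big_mkcond /= (big_rem (h q)) ?hU // eqxx big1_seq ?Monoid.simpm // => g /andP[/eqP Eg gin].
by move: gin; rewrite -Eg mem_rem_uniqF.
Qed.

Lemma span_graded (P : L -> Prop) : (forall u, P u -> exists g, Lg g u) -> graded_subspace Lg (spanS P).
Proof.
move=> Phom; split; first exact: span_sub.
move=> x [l [Hl ->]].
exists (undup [seq hdeg q.2 | q <- l]), (fun g => \sum_(q <- l | hdeg q.2 == g) q.1 *: q.2).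
split; first exact: undup_uniq.
split.
  move=> g; rewrite big_seq_cond; apply: (@subsum _ (Lsub g)) => q /andP[ql /eqP <-].
  by apply: subZ; [exact: Lsub | apply: hdegP; apply: Phom; apply: Hl].
split.
  move=> g _; exists [seq q <- l | hdeg q.2 == g]; split; last by rewrite big_filter.
  by move=> q; rewrite mem_filter => /andP[_ /Hl].
rewrite regroup ?undup_uniq // => q ql; by rewrite mem_undup; apply: map_f.
Qed.


Hypothesis Hsimple : simple_gLt Lg mu.

Lemma conn_all i j : conn i j.
Proof.
apply: NNPP => Hnc.
pose S := spanS (Sgen i).
have Hid : gLt_ideal Lg mu S.
  split; first by apply: span_graded; exact: Sgen_hom.
  by move=> s x Hx; apply: ideal_prod.
have Sei : S (e i) by apply: span1; left; exists i; split=> //; exact: conn_refl.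
case: (@Hsimple S Hid) => [H0|Hall].
  by move: (e_neq0 i); rewrite ((proj1 (H0 (e i))) Sei) eqxx.
have [l [Hl Ej]] := Hall (e j).
pose pE (q : F * L) := pb (exists c, q.2 = e c /\ conn i c).
rewrite (bigID pE) /= in Ej.
set Ep := \sum_(q <- l | pE q) _ in Ej.
set Vp := \sum_(q <- l | ~~ pE q) _ in Ej.
have HVp : V Vp.
  rewrite /Vp big_seq_cond; apply: (@subsum _ subV) => q /andP[ql nq].
  apply: subZ; first exact: subV.
  case: (Hl q ql) => [h|[ii [_ [_ h]]]] //; by move/pbP: nq.
have HEp : W Ep.
  rewrite /Ep; apply: (@subsum _ subW) => q /pbP[c [-> _]].
  by apply: subZ; [exact: subW | exact: eW].
have Vp0 : Vp = 0.
  apply: VW0 => //.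
  have -> : Vp = e j - Ep by rewrite Ej addrAC subrr add0r.
  by apply: subB; [exact: subW | exact: eW | exact: HEp].
rewrite Vp0 addr0 in Ej.
pose cidx (u : L) : cT I := odflt j (pick_opt (fun c => u = e c /\ conn i c)).
have cidxP : forall q, pE q -> q.2 = e (cidx q.2) /\ conn i (cidx q.2).
  move=> q /pbP [c Hc]; have [y [Ey Hy]] := @pick_optE _ (fun c => q.2 = e c /\ conn i c) c Hc.
  by rewrite /cidx Ey.
pose l2 : seq (F * cT I) := [seq (q.1, cidx q.2) | q <- l & pE q].
have El2 : Ep = \sum_(p <- l2) p.1 *: e p.2.
  rewrite /l2 big_map big_filter /Ep; apply: eq_bigr => q hq /=.
  by rewrite -(proj1 (cidxP q hq)).
have l2c : forall p, p \in l2 -> conn i p.2.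
  by move=> p /mapP[q]; rewrite mem_filter => /andP[hq _] ->; exact: (proj2 (cidxP q hq)).
pose U : seq (cT I) := undup ((j : cT I) :: [seq p.2 | p <- l2]).
pose c (k : cT I) : F := (if k == (j : cT I) then 1 else 0) - \sum_(p <- l2 | p.2 == k) p.1.
have Hsum : \sum_(k <- U) c k *: e k = 0.
  rewrite /c.
  under eq_bigr => k _ do rewrite scalerBl scaler_suml.
  rewrite sumrB.
  have -> : \sum_(k <- U) (if k == (j : cT I) then 1 else 0) *: e k = e j.
    rewrite (big_rem (j : cT I)); last by rewrite mem_undup mem_head.
    rewrite eqxx scale1r big1_seq ?Monoid.simpm // => k /andP[_ kin].
    have -> : (k == (j : cT I)) = false.
      apply/negbTE; apply/eqP => E; move: kin; rewrite E mem_rem_uniqF //; exact: undup_uniq.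
    by rewrite scale0r.
  have -> : \sum_(k <- U) \sum_(p <- l2 | p.2 == k) p.1 *: e k = \sum_(p <- l2) p.1 *: e p.2.
    rewrite -(@regroup _ _ l2 snd U (fun p => p.1 *: e p.2)).
    - apply: eq_bigr => k _; apply: eq_bigr => p /eqP ->; done.
    - exact: undup_uniq.
    - by move=> q ql; rewrite mem_undup inE map_f ?orbT.
  by rewrite -El2 Ej subrr.
have := @indep_seq U c (undup_uniq _) Hsum (j : cT I).
rewrite mem_undup mem_head => /(_ erefl).
rewrite /c eqxx big1_seq ?subr0; first by move/eqP; rewrite oner_eq0.
move=> p /andP[/eqP pj pl2]; exfalso; apply: Hnc; rewrite -pj; exact: l2c.
Qed.

End Main.

Theorem corollary3p10 (F : fieldType) (G : zmodType) (eps : G -> G -> F) (n : nat)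
  (L : lmodType F) (Lg : G -> L -> Prop) (mu : {ffun 'I_n -> L} -> L)
  (alpha : 'I_n -> 'I_n -> 'I_n -> 'S_n -> 'S_n.-1 -> F)
  (V W : L -> Prop) (I : Type) (e : I -> L) :
  (2 <= n)%N ->
  bicharacter eps ->
  graded_nary_algebra Lg mu ->
  color_gLt eps Lg mu alpha ->
  quasi_mult_basis Lg mu V W e ->
  simple_gLt Lg mu ->
  forall i j : I, connected mu e V i j.
Proof.
move=> n2 _ Hgr Hglt Hq Hs i j.
exact: (@conn_all F G n L Lg mu V W I e n2 Hgr Hq eps alpha Hglt Hs i j).
Qed.
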